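(* Let $X$ be a separable metric space, $g$ a Hausdorff function and $E\subseteq X$. Then $\underline{\mathcal P}^g_0(E)=0$ if and only if $\underline{\mathcal B}^g_0(E)=0$.
   Context: In a metric space $(X,d)$: $\operatorname{gap}F=\inf\{d(x,y):x,y\in F,x\neq y\}$, $C_\delta(E)=\sup\{|F|:F\subseteq E,\operatorname{gap}F>\delta\}$. A Hausdorff function is a nondecreasing $g:(0,\infty)\to(0,\infty)$. A scale is a set $\Delta\subseteq(0,\infty)$ with $0$ in its closure. A packing is a family $\pi=\{(x_i,r_i):i\in I\}\subseteq X\times(0,\infty)$ with $d(x_i,x_j)>r_i$ for all $i\ne j$; it is a packing of $E$ if all $x_i\in E$, $\Delta$-valued if all $r_i\in\Delta$, $\delta$-fine if all $r_i\le\delta$; $g(\pi)=\sum_ig(r_i)$. $\mathcal P^g_{\Delta,0}(E)=\inf_{\delta>0}\sup\{g(\pi):\pi$ a $\Delta$-valued $\delta$-fine packing of $E\}$; $\underline{\mathcal P}^g_0(E)=\inf_\Delta\mathcal P^g_{\Delta,0}(E)$ (infimum over all scales); $\underline{\mathcal B}^g_0(E)=\liminf_{\delta\to0}C_\delta(E)g(\delta)$. *)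

(* Defs.v *)
From HB Require Import structures.
From mathcomp Require Import all_boot all_order all_algebra.
From mathcomp Require Import all_classical all_reals.
From mathcomp Require Import ereal esum.
Set Implicit Arguments. Unset Strict Implicit. Unset Printing Implicit Defensive.
Import Order.TTheory GRing.Theory Num.Theory.
Local Open Scope classical_set_scope.
Local Open Scope ring_scope.
Local Open Scope ereal_scope.

Section Defs.
Variables (R : realType) (X : choiceType) (d : X -> X -> R).

Definition is_metric : Prop :=
  [/\ forall x y, (0 <= d x y)%R,
      forall x y, d x y = 0%R <-> x = y,
      forall x y, d x y = d y x &
      forall x y z, (d x z <= d x y + d y z)%R].

Definition separable : Prop :=
  exists S : set X, countable S /\
    forall x (e : R), (0 < e)%R -> exists2 s, S s & (d x s < e)%R.

Definition hausdorff_function (g : R -> R) : Prop :=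
  (forall r, (0 < r)%R -> (0 < g r)%R) /\
  (forall r s, (0 < r)%R -> (r <= s)%R -> (g r <= g s)%R).

(* gap F = inf { d x y : x, y in F, x <> y }  (inf of empty set = +oo) *)
Definition gap (F : set X) : \bar R :=
  ereal_inf [set (d p.1 p.2)%:E | p in [set p : X * X | [/\ F p.1, F p.2 & p.1 <> p.2]]].

(* C_delta(E) = sup { |F| : F subset E, gap F > delta }, with |F| = +oo for
   infinite F *)
Definition Cdelta (delta : R) (E : set X) : \bar R :=
  ereal_sup ([set (n%:R)%:E | n in [set n : nat |
                exists F, [/\ F `<=` E, (F #= `I_n)%card & delta%:E < gap F]]]
             `|` [set x | x = +oo /\
                exists F, [/\ F `<=` E, infinite_set F & delta%:E < gap F]]).

Definition scale (Delta : set R) : Prop :=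
  (forall r, Delta r -> (0 < r)%R) /\
  (forall e : R, (0 < e)%R -> exists2 r, Delta r & (r < e)%R).

(* a packing, represented as a set of (center, radius) pairs *)
Definition packing (P : set (X * R)) : Prop :=
  (forall p, P p -> (0 < p.2)%R) /\
  (forall p q, P p -> P q -> p <> q -> (p.2 < d p.1 q.1)%R).

Definition packing_of (E : set X) (Delta : set R) (delta : R)
    (P : set (X * R)) : Prop :=
  [/\ packing P, forall p, P p -> E p.1, forall p, P p -> Delta p.2 &
      forall p, P p -> (p.2 <= delta)%R].

Definition gpack (g : R -> R) (P : set (X * R)) : \bar R :=
  \esum_(p in P) (g p.2)%:E.

Definition packing_premeasure (g : R -> R) (Delta : set R) (E : set X)
    : \bar R :=
  ereal_inf [set ereal_sup [set gpack g P | P in packing_of E Delta delta]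
            | delta in [set delta : R | (0 < delta)%R]].

Definition lower_packing (g : R -> R) (E : set X) : \bar R :=
  ereal_inf [set packing_premeasure g Delta E | Delta in scale].

Definition liminf0 (f : R -> \bar R) : \bar R :=
  ereal_sup [set ereal_inf [set f delta | delta in
                 [set delta : R | (0 < delta)%R /\ (delta < eps)%R]]
            | eps in [set eps : R | (0 < eps)%R]].

Definition lower_box (g : R -> R) (E : set X) : \bar R :=
  liminf0 (fun delta => Cdelta delta E * (g delta)%:E).

End Defs.

(* Main.v *)
Require Import Defs.
From HB Require Import structures.
From mathcomp Require Import all_boot all_order all_algebra.
From mathcomp Require Import all_classical all_reals.
From mathcomp Require Import ereal esum sequences finmap.
Import Order.TTheory GRing.Theory Num.Theory.
Local Open Scope classical_set_scope.
Local Open Scope ring_scope.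
Local Open Scope ereal_scope.
Section S.
Variables (R : realType) (X : choiceType) (d : X -> X -> R).

Lemma seq_min (r : \bar R) (s : seq (\bar R)) : r < +oo ->
  (forall v, v \in s -> r < v) -> exists2 m, r < m & forall v, v \in s -> m <= v.
Proof.
move=> ro; elim: s => [_|a s IH H]; first by exists +oo.
have [v vs|m rm hm] := IH; first by apply: H; rewrite inE vs orbT.
exists (Order.min a m); first by rewrite lt_min (H a (mem_head _ _)) rm.
move=> v; rewrite inE => /orP[/eqP->|vs]; first by rewrite ge_min lexx.
by rewrite ge_min hm ?orbT.
Qed.

Lemma gap_gt (B : {fset X}) r :
  (forall x y, x \in B -> y \in B -> x != y -> (r < d x y)%R) ->
  r%:E < gap d [set` B].
Proof.
move=> H.
set s := [seq (d p.1 p.2)%:E | p <- [seq (x, y) | x <- B, y <- B] & p.1 != p.2].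
have [|m rm hm] := @seq_min r%:E s (ltry r).
  move=> v /mapP[p]; rewrite mem_filter => /andP[ne].
  move=> /allpairsP[[x y] [/= xB yB pe]] ->; subst p.
  by rewrite lte_fin H.
apply: (lt_le_trans rm); apply/ereal_infP => _ [[x y] [/= xB yB ne] <-].
apply: hm; apply/mapP; exists (x, y) => //.
rewrite mem_filter /=; apply/andP; split; first by apply/eqP.
by apply/allpairsP; exists (x, y).
Qed.

Lemma gap_le (F : set X) x y : F x -> F y -> x <> y -> gap d F <= (d x y)%:E.
Proof. by move=> Fx Fy ne; apply: ereal_inf_lbound; exists (x, y). Qed.

Lemma gap_sub (A B : set X) : A `<=` B -> gap d B <= gap d A.
Proof.
move=> AB; apply: le_ereal_inf => _ [p [p1 p2 ne] <-]; exists p => //.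
by split; [exact: AB|exact: AB|].
Qed.

Lemma fset_card_eq (B : {fset X}) : ([set` B] #= `I_#|`B|)%card.
Proof.
apply/fcard_eq; [exact: finite_fset| |].
  by apply/finite_setP; exists #|`B|.
by rewrite set_fsetK (card_fset_set (card_eqxx _)).
Qed.

Lemma C_ge (E : set X) (B : {fset X}) r : [set` B] `<=` E ->
  r%:E < gap d [set` B] -> (#|`B|%:R)%:E <= Cdelta d r E.
Proof.
move=> BE gB; apply: ereal_sup_ubound; left; exists #|`B| => //.
by exists [set` B]; split => //; exact: fset_card_eq.
Qed.

Lemma C_ge0 (E : set X) r : 0 <= Cdelta d r E.
Proof.
have := @C_ge E fset0 r; rewrite cardfs0; apply => //.
by apply: gap_gt => x y; rewrite inE.
Qed.

Lemma C_le (E : set X) r (c : R) :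
  (forall B : {fset X}, [set` B] `<=` E -> r%:E < gap d [set` B] ->
     (#|`B|%:R <= c)%R) -> Cdelta d r E <= c%:E.
Proof.
move=> H; apply: ge_ereal_sup => _ [[n [F [FE Fn gF]] <-]|[-> [F [FE inf gF]]]].
  have finF : finite_set F by apply/finite_setP; exists n.
  have := H (fset_set F); rewrite fset_setK// (card_fset_set Fn) lee_fin.
  by apply.
exfalso.
have [B BF Bn] := infinite_set_fset (Num.truncn c).+1 inf.
have := H B (subset_trans BF FE) (lt_le_trans gF (gap_sub _ _ BF)).
apply/negP; rewrite -ltNge; apply: lt_le_trans (truncnS_gt c) _.
by rewrite ler_nat.
Qed.

Lemma sum_cst (T : choiceType) (B : {fset T}) (c : R) :
  \sum_(i <- B) c%:E = (#|`B|%:R * c)%:E.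
Proof.
by rewrite sumEFin big_const_seq count_predT iter_addr_0 mulr_natl cardfE.
Qed.

Lemma pack_fset (g : R -> R) (E : set X) (Delta : set R) delta (B : {fset X}) r :
  [set` B] `<=` E -> r%:E < gap d [set` B] -> (0 < r)%R -> Delta r ->
  (r <= delta)%R ->
  exists P, packing_of d E Delta delta P /\ (#|`B|%:R * g r)%:E <= gpack g P.
Proof.
move=> BE gB r0 Dr rd.
have inj : injective (fun x : X => (x, r)) by move=> x y [].
exists [set` [fset (x, r) | x in B]%fset]; split.
  split.
  - split.
      by move=> p /imfsetP[x _ ->].
    move=> p q /imfsetP[x xB ->] /imfsetP[y yB ->] /= ne.
    have xy : x <> y by move=> exy; apply: ne; rewrite exy.
    by rewrite -lte_fin (lt_le_trans gB) // gap_le.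
  - by move=> p /imfsetP[x xB ->]; apply: BE.
  - by move=> p /imfsetP[x xB ->].
  - by move=> p /imfsetP[x xB ->].
apply: esum_ge; exists [set` [fset (x, r) | x in B]%fset].
  by split; [exact: finite_fset|].
rewrite fsbig_finite ?finite_fset // set_fsetK big_imfset //=.
  by rewrite sum_cst.
by move=> x y _ _; apply: inj.
Qed.

Lemma level_le (g : R -> R) (E : set X) Delta delta P r :
  packing_of d E Delta delta P -> (0 <= g r)%R ->
  \esum_(p in [set p | P p /\ p.2 = r]) (Num.max (g p.2) 0%R)%:E
    <= Cdelta d r E * (g r)%:E.
Proof.
move=> [[_ Pd] PE _ _] g0.
apply: ge_ereal_sup => _ [A [finA AJ] <-].
rewrite fsbig_finite //.
have inA : forall p, p \in fset_set A -> P p /\ p.2 = r.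
  by move=> p; rewrite in_fset_set // => /set_mem /AJ.
rewrite (@eq_big_seq _ _ _ _ _ _ (fun=> (g r)%:E)); last first.
  by move=> p /inA[_ ->]; rewrite max_l.
rewrite sum_cst.
have cardB : #|` [fset p.1 | p in fset_set A]%fset| = #|` fset_set A|.
  rewrite card_in_imfset //= => -[x a] [y b] /inA[_ /= ->] /inA[_ /= ->] /= ->.
  by [].
rewrite -cardB EFinM; apply: lee_wpmul2r; first by rewrite lee_fin.
apply: C_ge.
  by move=> x /imfsetP[p /inA[Pp _] ->]; apply: PE.
apply: gap_gt => x y /imfsetP[p /inA[Pp p2] ->] /imfsetP[q /inA[Pq _] ->] ne.
rewrite -p2; apply: Pd => // epq; move: ne; rewrite epq eqxx.
by [].
Qed.

Lemma lower_packing_ge0 (g : R -> R) (E : set X) : 0 <= lower_packing d g E.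
Proof.
apply/ereal_infP => _ [Delta _ <-]; apply/ereal_infP => _ [delta _ <-].
apply: (@le_trans _ _ (gpack g set0)); first by rewrite /gpack esum_set0.
apply: ereal_sup_ubound; exists set0 => //.
Qed.

Lemma lower_box_ge0 (g : R -> R) (E : set X) : hausdorff_function g ->
  0 <= lower_box d g E.
Proof.
move=> [gp _].
apply: (@le_trans _ _ (ereal_inf [set Cdelta d delta E * (g delta)%:E | delta in
                 [set delta : R | (0 < delta)%R /\ (delta < 1)%R]])).
  apply/ereal_infP => _ [r [r0 _] <-]; apply: mule_ge0; first exact: C_ge0.
  by rewrite lee_fin; apply/ltW/gp.
by apply: ereal_sup_ubound; exists 1%R => //=.
Qed.

Lemma box_of_pack (g : R -> R) (E : set X) : hausdorff_function g ->
  lower_packing d g E = 0 -> lower_box d g E <= 0.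
Proof.
move=> [gp gm] H; apply: ge_ereal_sup => _ [eps eps0 <-].
apply/lee_addgt0Pr => e e0; rewrite add0e.
have : lower_packing d g E < e%:E by rewrite H lte_fin.
move=> /ereal_inf_lt[_ [Delta [Dpos Dsmall] <-]].
move=> /ereal_inf_lt[_ [delta delta0 <-]] Hsup.
have [r Dr] : exists2 r, Delta r & (r < Num.min eps delta)%R.
  by apply: Dsmall; rewrite lt_min eps0 delta0.
rewrite lt_min => /andP[reps rdelta].
have r0 := Dpos r Dr; have gr := gp r r0.
apply: (le_trans (ereal_inf_lbound _)); first by exists r.
rewrite -lee_pdivlMr // -EFinM; apply: C_le => B BE gB.
have [P [PP Pg]] := @pack_fset g E Delta delta B r BE gB r0 Dr (ltW rdelta).
have : (#|`B|%:R * g r)%:E < e%:E.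
  apply: le_lt_trans Pg (le_lt_trans _ Hsup).
  by apply: ereal_sup_ubound; exists P.
by rewrite lte_fin ler_pdivlMr // => /ltW.
Qed.

Fixpoint mkseq (f : R * R -> R) (e : R) (n : nat) : R :=
  f ((if n is m.+1 then Num.min (mkseq f e m) (n.+1%:R)^-1 else 1)%R,
     (e / (2 ^ n.+1)%:R)%R).

Lemma pack_of_box (g : R -> R) (E : set X) : hausdorff_function g ->
  lower_box d g E = 0 -> lower_packing d g E <= 0.
Proof.
move=> [gp gm] H; apply/lee_addgt0Pr => e e0; rewrite add0e.
have pick : forall a : R * R, exists dl : R, (0 < a.1)%R -> (0 < a.2)%R ->
    [/\ (0 < dl)%R, (dl < a.1)%R & Cdelta d dl E * (g dl)%:E < a.2%:E].
  move=> [a b]; case: (pselect ((0 < a)%R /\ (0 < b)%R)) => [[a0 b0]|nab];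
    last by exists 0%R => /= *; exfalso; apply: nab.
  have : ereal_inf [set Cdelta d delta E * (g delta)%:E | delta in
                 [set delta : R | (0 < delta)%R /\ (delta < a)%R]] < b%:E.
    apply: (@le_lt_trans _ _ 0); last by rewrite lte_fin.
    by rewrite -H; apply: ereal_sup_ubound; exists a.
  by move=> /ereal_inf_lt[_ [dl [dl0 dla] <-] lt]; exists dl.
have [f hf] := choice pick.
pose dl := mkseq f e.
have Hd : forall n, [/\ (0 < dl n)%R, (dl n < n.+1%:R^-1)%R &
    Cdelta d (dl n) E * (g (dl n))%:E < (e / (2 ^ n.+1)%:R)%:E]
    /\ ((0 < n)%N -> (dl n < dl n.-1)%R).
  elim => [|n [[IH0 IH1 IH2] _]].
    have [] //= := hf (1, e / (2 ^ 1)%:R)%R.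
    by rewrite divr_gt0 // ltr0n expn_gt0.
    by move=> a b c; rewrite invr1; split.
  have [] //= := hf (Num.min (dl n) (n.+2%:R)^-1, e / (2 ^ n.+2)%:R)%R.
  - by rewrite lt_min IH0 invr_gt0 ltr0n.
  - by rewrite divr_gt0 // ltr0n expn_gt0.
  move=> a; rewrite lt_min => /andP[b1 b2] c; split; first by split.
  by move=> _.
have dec : forall k n, (dl (n.+1 + k)%N < dl n)%R.
  elim => [|k IH] n; first by rewrite addn0; have [_ /(_ isT)] := Hd n.+1.
  rewrite addnS; apply: lt_trans (IH n); by have [_ /(_ isT)] := Hd (n.+1 + k).+1.
have dl_inj : injective dl.
  move=> n m enm; case: (ltngtP n m) => // [nm|mn].
    have := dec (m - n.+1)%N n; rewrite subnKC // enm ltxx.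
    by [].
  have := dec (n - m.+1)%N m; rewrite subnKC // enm ltxx.
  by [].
pose Delta := range dl.
have scD : scale Delta.
  split; first by move=> _ [n _ <-]; have [[]] := Hd n.
  move=> e' e'0; exists (dl (Num.truncn e'^-1)); first by exists (Num.truncn e'^-1).
  have [[_ h _] _] := Hd (Num.truncn e'^-1); apply: lt_trans h _.
  rewrite invf_plt ?posrE ?ltr0n //; exact: truncnS_gt.
apply: le_trans (ereal_inf_lbound _) _; first by exists Delta.
apply: le_trans (ereal_inf_lbound _) _; first by exists 1%R => /=.
apply: ge_ereal_sup => _ [P PP <-].
have [[Ppos Pd] PE PD Pf] := PP.
have -> : gpack g P = \esum_(p in P) (Num.max (g p.2) 0%R)%:E.
  by apply: eq_esum => p Pp; rewrite max_l // ltW // gp // Ppos.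
have -> : P = \bigcup_(n in setT) [set p | P p /\ p.2 = dl n].
  apply/seteqP; split => [p Pp|p [n _ [Pp _]]] //.
  by have [n _ e2] := PD p Pp; exists n => //; split.
rewrite esum_bigcupT; first last.
- by move=> x; rewrite lee_fin le_max lexx orbT.
- by move=> i j _ _ [p [[_ ei] [_ ej]]]; apply: dl_inj; rewrite -ei -ej.
rewrite -nneseries_esumT; last by move=> n; apply: esum_ge0 => x _; rewrite lee_fin le_max lexx orbT.
apply: le_trans (epsilon_trick0 xpredT (ltW e0)).
apply: lee_nneseries.
  by move=> n _ _; apply: esum_ge0 => x _; rewrite lee_fin le_max lexx orbT.
move=> n _; have [[d0 _ h] _] := Hd n.
apply: le_trans (ltW h); apply: level_le PP _.
by apply/ltW/gp.
Qed.
End S.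

Theorem proposition2p11 (R : realType) (X : choiceType) (d : X -> X -> R)
    (g : R -> R) (E : set X) :
  is_metric d -> separable d -> hausdorff_function g ->
  (lower_packing d g E = 0 <-> lower_box d g E = 0).
Proof.
move=> _ _ hg; split => H; apply/eqP; rewrite eq_le.
  by rewrite box_of_pack // lower_box_ge0.
by rewrite pack_of_box // lower_packing_ge0.
Qed.
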